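(* Let $X$ be a non-trivial separated locally convex space with topology $\sigma(X,X^* )$, let $T$ be an arbitrary index set and let $f,g,h_t:X\to\overline{\mathbb{R}}$ ($t\in T$) be proper convex functions. Let $A=\{x\in X: h_t(x)\le 0\ \text{for all } t\in T\}$ and consider $$(P)\qquad \inf_{x\in A}\{f(x)-g(x)\},\qquad (\overline{D}_L)\qquad \sup_{\lambda\in\mathbb{R}^{(T)}_+}\ \inf_{(u^*,v^*,\gamma)\in W}\{g^c(u^*,v^*,\gamma)-(f+\lambda h)^c(u^*,v^*,\gamma)\}.$$ If $(P)$ is solvable and has an optimal solution $x_0$ with $\partial_c g(x_0)\neq\emptyset$, then weak duality holds for $(P)$–$(\overline{D}_L)$, i.e. $v(P)\ge v(\overline{D}_L)$.
   Context: $X^*$ is the topological dual of $X$, $\langle x,x^*\rangle$ the pairing, and $W:=X^*\times X^*\times\mathbb{R}$. The coupling function $c:X\times W\to\overline{\mathbb{R}}$ is $c(x,(x^*,y^*,\alpha))=\langle x,x^*\rangle$ if $\langle x,y^*\rangle<\alpha$ and $+\infty$ otherwise. For $\varphi:X\to\overline{\mathbb{R}}$, $\varphi^c(w):=\sup_{x\in X}\{c(x,w)-\varphi(x)\}$ ($w\in W$), with the convention $(+\infty)+(-\infty)=(-\infty)+(+\infty)=(+\infty)-(+\infty)=(-\infty)-(-\infty)=-\infty$ (also used in the dual objective). The c-subdifferential of $g$ at $x_0$ is $\partial_c g(x_0):=\{(x^*,y^*,\alpha)\in W:\ \langle x_0,y^*\rangle<\alpha,\ g(x)-g(x_0)\ge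 c(x,(x^*,y^*,\alpha))-c(x_0,(x^*,y^*,\alpha))\ \text{for all } x\in X\}$. $\mathbb{R}^{(T)}_+$ is the set of families $\lambda=(\lambda_t)_{t\in T}$ with $\lambda_t\ge0$ and only finitely many $\lambda_t\neq0$, and $\lambda h:=\sum_{t:\lambda_t\ne0}\lambda_t h_t$. By convention $f(x)-g(x)=+\infty$ whenever $x\notin\operatorname{dom} f$. $v(\cdot)$ denotes optimal value; $(P)$ is solvable if its infimum is attained. *)

(* Defs.v *)
From HB Require Import structures.
From mathcomp Require Import all_boot all_order all_algebra.
From mathcomp Require Import all_classical all_reals all_analysis.
Set Implicit Arguments. Unset Strict Implicit. Unset Printing Implicit Defensive.
Import Order.TTheory GRing.Theory Num.Theory.
Import numFieldNormedType.Exports.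
Local Open Scope classical_set_scope.
Local Open Scope ring_scope.

Section Defs.
Context {R : realType} {X : tvsType R}.

Definition in_dual (f : X -> R) : Prop :=
  (forall (a : R) (x y : X), f (a *: x + y) = a * f x + f y) /\ continuous f.

(* the topology of X is sigma(X, X^* ): every neighbourhood of x contains a
   basic weak neighbourhood (the converse inclusion holds automatically since
   elements of X^* are continuous) *)
Definition has_weak_topology : Prop :=
  forall (x : X) (U : set X), nbhs x U ->
    exists (n : nat) (fs : 'I_n -> X -> R), (forall i, in_dual (fs i)) /\
      exists2 e : R, 0 < e &
        [set y | forall i, `|fs i y - fs i x| < e] `<=` U.

Definition Wty := ((X -> R) * (X -> R) * R)%type.
Definition inW (w : Wty) : Prop := in_dual w.1.1 /\ in_dual w.1.2.

Definition coupling (x : X) (w : Wty) : \bar R :=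
  if w.1.2 x < w.2 then (w.1.1 x)%:E else +oo%E.

(* c-conjugate (the ereal subtraction of mathcomp follows the stated
   convention: +oo + -oo = -oo + +oo = -oo) *)
Definition cconj (phi : X -> \bar R) (w : Wty) : \bar R :=
  ereal_sup (range (fun x => (coupling x w - phi x)%E)).

Definition csubdiff (g : X -> \bar R) (x0 : X) : set Wty :=
  [set w | inW w /\ w.1.2 x0 < w.2 /\
     forall x, (coupling x w - coupling x0 w <= g x - g x0)%E].

Definition proper_efun (phi : X -> \bar R) : Prop :=
  (forall x, phi x <> -oo%E) /\ exists x, phi x <> +oo%E.

Definition convex_efun (phi : X -> \bar R) : Prop :=
  forall (x y : X) (t : R), 0 < t < 1 ->
    (phi (t *: x + (1 - t) *: y)%R <= t%:E * phi x + (1 - t)%:E * phi y)%E.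

Context {T : Type}.

Definition multipliers : set (T -> R) :=
  [set l | (forall t, 0 <= l t) /\ finite_set [set t | l t != 0]].

Definition lagr (f : X -> \bar R) (h : T -> X -> \bar R) (l : T -> R) :
  X -> \bar R :=
  fun x => (f x + \sum_(t \in [set t : {classic T} | l t != 0%R]) ((l t)%:E * h t x))%E.

Definition feasible (h : T -> X -> \bar R) : set X :=
  [set x | forall t, (h t x <= 0)%E].

(* objective f - g, with f(x) - g(x) = +oo outside dom f *)
Definition objP (f g : X -> \bar R) (x : X) : \bar R :=
  if f x == +oo%E then +oo%E else (f x - g x)%E.

Definition val_P (f g : X -> \bar R) (h : T -> X -> \bar R) : \bar R :=
  ereal_inf (objP f g @` feasible h).

Definition solvable_P (f g : X -> \bar R) (h : T -> X -> \bar R) (x0 : X) : Prop :=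
  feasible h x0 /\ objP f g x0 = val_P f g h.

Definition val_DL (f g : X -> \bar R) (h : T -> X -> \bar R) : \bar R :=
  ereal_sup ((fun l => ereal_inf
     ((fun w => (cconj g w - cconj (lagr f h l) w)%E) @` inW)) @` multipliers).

End Defs.

(* Main.v *)
Require Import Defs.
From HB Require Import structures.
From mathcomp Require Import all_boot all_order all_algebra.
From mathcomp Require Import all_classical all_reals all_analysis.
From mathcomp Require Import lra.
Import Order.TTheory GRing.Theory Num.Theory.
Import numFieldNormedType.Exports.
Local Open Scope classical_set_scope.
Local Open Scope ring_scope.

Theorem corollary4p2 (R : realType) (X : tvsType R) (T : Type)
  (f g : X -> \bar R) (h : T -> X -> \bar R) :
  hausdorff_space X ->
  @has_weak_topology R X ->
  (exists x : X, x != 0) ->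
  proper_efun f -> convex_efun f ->
  proper_efun g -> convex_efun g ->
  (forall t, proper_efun (h t) /\ convex_efun (h t)) ->
  (exists x0 : X, solvable_P f g h x0 /\ csubdiff g x0 !=set0) ->
  (val_DL f g h <= val_P f g h)%E.
Proof.
move=> _ _ _ [fnoo _] _ [gnoo [xg gxg]] _ hP [x0 [[feas opt] [w [wW [wlt wsub]]]]].
rewrite -opt.
apply: ge_ereal_sup => _ [l [l0 lfin] <-].
apply: (@le_trans _ _ (cconj g w - cconj (lagr f h l) w)%E).
  by apply: ereal_inf_lbound; exists w.
have c0E : coupling x0 w = (w.1.1 x0)%:E by rewrite /coupling wlt.
have cnoo : forall x, coupling x w <> -oo%E.
  by move=> x; rewrite /coupling; case: ifP.
rewrite /objP; case: ifPn => [_|fx0]; first by rewrite leey.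
have [fr fE] : exists fr, f x0 = fr%:E.
  move: (fnoo x0) fx0; case: (f x0) => // r _ _; by exists r.
have [gr gE] : exists gr, g x0 = gr%:E.
  move: (gnoo x0) (wsub xg); case: (g x0) => [r _ _| |//]; first by exists r.
  move=> _; move: (gnoo xg) gxg (cnoo xg); rewrite c0E.
  case: (g xg) => // r _ _; case: (coupling xg w) => //.
have gc : (cconj g w <= (w.1.1 x0)%:E - gr%:E)%E.
  apply: ge_ereal_sup => _ [x _ <-].
  move: (wsub x) (gnoo x) (cnoo x); rewrite c0E gE.
  case: (coupling x w) => [a| |//]; case: (g x) => [b| |//] //.
  - rewrite -!EFinB !lee_fin => H _ _; lra.
  - move=> _ _ _; rewrite /= leNye //.
  - move=> _ _ _; rewrite /= leNye //.
have Fc : ((w.1.1 x0)%:E - fr%:E <= cconj (lagr f h l) w)%E.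
  apply: (@le_trans _ _ (coupling x0 w - lagr f h l x0)%E); last first.
    by apply: ereal_sup_ubound; exists x0.
  rewrite c0E; apply: leeB => //.
  rewrite /lagr fE -[X in (_ <= X)%E]adde0; apply: leeD => //.
  apply: fsume_le0 => t _; apply: mule_ge0_le0 => //.
  by rewrite lee_fin.
apply: le_trans (leeB gc Fc) _.
rewrite fE gE -!EFinB lee_fin; lra.
Qed.
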